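(* For $n\ge2$, the natural action of $\mathrm{O}(2n)$ on $\mathbb{F}_2^{2n}$ has exactly four orbits: $\{0\}$, $\{j\}$, $\mathbb{F}_2^{2n,+}\setminus\{0,j\}$, and $\mathbb{F}_2^{2n,-}$.
   Context: All arithmetic is over $\mathbb{F}_2$. $\mathrm{O}(2n)$ is the group of binary $2n\times 2n$ matrices $A$ with $A^TA=AA^T=I$. $j=(1,\dots,1)^T$; $\mathbb{F}_2^{2n,+}$ (resp. $\mathbb{F}_2^{2n,-}$) is the set of vectors of even (resp. odd) Hamming weight. *)

(* Defs.v *)
From mathcomp Require Import all_boot all_order all_algebra all_fingroup.
Set Implicit Arguments. Unset Strict Implicit. Unset Printing Implicit Defensive.
Import GRing.Theory.
Local Open Scope ring_scope.

Definition orth_group (m : nat) : {set 'M['F_2]_m} :=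
  [set A : 'M['F_2]_m | (A^T *m A == 1%:M) && (A *m A^T == 1%:M)].

Definition hweight (m : nat) (v : 'cV['F_2]_m) : nat :=
  #|[set i : 'I_m | v i 0 != 0]|.

Definition jvec (m : nat) : 'cV['F_2]_m := const_mx 1.

Definition even_vecs (m : nat) : {set 'cV['F_2]_m} :=
  [set v : 'cV['F_2]_m | ~~ odd (hweight v)].
Definition odd_vecs (m : nat) : {set 'cV['F_2]_m} :=
  [set v : 'cV['F_2]_m | odd (hweight v)].

Definition orth_orbit (m : nat) (v : 'cV['F_2]_m) : {set 'cV['F_2]_m} :=
  [set A *m v | A in orth_group m].

Definition orth_orbits (m : nat) : {set {set 'cV['F_2]_m}} :=
  [set orth_orbit v | v : 'cV['F_2]_m].

(* Main.v *)
Require Import Defs.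
From mathcomp Require Import all_boot all_order all_algebra all_fingroup zify.
Set Implicit Arguments. Unset Strict Implicit. Unset Printing Implicit Defensive.
Import GRing.Theory.
Local Open Scope ring_scope.

Lemma F2_cases (x : 'F_2) : x = 0 \/ x = 1.
Proof. case: x => [[|[|k]] Hk]; [left|right|by []]; exact/val_inj. Qed.

Lemma F2_mulxx (x : 'F_2) : x * x = x.
Proof. by case: (F2_cases x) => ->; apply/eqP. Qed.

Lemma F2_addxx (x : 'F_2) : x + x = 0.
Proof. by case: (F2_cases x) => ->; apply/eqP. Qed.

Lemma F2_natr (k : nat) : (k%:R : 'F_2) = (odd k)%:R.
Proof.
elim: k => [|k IH] //; rewrite -natr1 IH /=.
by case: (odd k); apply/eqP.
Qed.

Definition dot m (x y : 'cV['F_2]_m) : 'F_2 := \sum_i x i 0 * y i 0.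

Lemma dot_mx m (x y : 'cV['F_2]_m) : (x^T *m y) 0 0 = dot x y.
Proof. by rewrite mxE; apply: eq_bigr => i _; rewrite mxE. Qed.

Lemma dotC m (x y : 'cV['F_2]_m) : dot x y = dot y x.
Proof. by apply: eq_bigr => i _; rewrite mulrC. Qed.

Lemma dotDl m (x y z : 'cV['F_2]_m) : dot (x + y) z = dot x z + dot y z.
Proof. by rewrite /dot -big_split; apply: eq_bigr => i _; rewrite mxE mulrDl. Qed.

Lemma dotDr m (x y z : 'cV['F_2]_m) : dot z (x + y) = dot z x + dot z y.
Proof. by rewrite !(dotC z) dotDl. Qed.

Lemma dotZl m a (x z : 'cV['F_2]_m) : dot (a *: x) z = a * dot x z.
Proof. by rewrite /dot mulr_sumr; apply: eq_bigr => i _; rewrite mxE mulrA. Qed.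

Lemma dot_deltar m (x : 'cV['F_2]_m) a : dot x (delta_mx a 0) = x a 0.
Proof.
rewrite /dot (bigD1 a) //= big1 ?addr0 => [|i ne]; first by rewrite mxE !eqxx mulr1.
by rewrite mxE (negbTE ne) mulr0.
Qed.

Lemma dot_deltal m (x : 'cV['F_2]_m) a : dot (delta_mx a 0) x = x a 0.
Proof. by rewrite dotC dot_deltar. Qed.

Lemma dot_self m (x : 'cV['F_2]_m) : dot x x = \sum_i x i 0.
Proof. by apply: eq_bigr => i _; rewrite F2_mulxx. Qed.

Lemma hweight_dot m (x : 'cV['F_2]_m) : odd (hweight x) = (dot x x == 1).
Proof.
rewrite dot_self.
have -> : \sum_i x i 0 = \sum_(i in [set i | x i 0 != 0]) (1 : 'F_2).
  rewrite [RHS]big_mkcond /=; apply: eq_bigr => i _; rewrite inE.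
  by case: (F2_cases (x i 0)) => ->.
rewrite sumr_const -/(hweight x) -mulr_natl mulr1 F2_natr.
by case: (odd _).
Qed.

Lemma add_xx m (x : 'cV['F_2]_m) : x + x = 0.
Proof. by apply/matrixP => i j; rewrite !mxE F2_addxx. Qed.

Lemma addKx m (x y : 'cV['F_2]_m) : x + (x + y) = y.
Proof. by rewrite addrA add_xx add0r. Qed.

Lemma inG m (A : 'M['F_2]_m) :
  (A \in orth_group m) = (A^T *m A == 1%:M) && (A *m A^T == 1%:M).
Proof. by rewrite inE. Qed.

Lemma G1 m : (1%:M : 'M['F_2]_m) \in orth_group m.
Proof. by rewrite inG trmx1 mul1mx eqxx. Qed.

Lemma GM m (A B : 'M['F_2]_m) :
  A \in orth_group m -> B \in orth_group m -> A *m B \in orth_group m.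
Proof.
rewrite !inG => /andP[/eqP A1 /eqP A2] /andP[/eqP B1 /eqP B2].
rewrite trmx_mul -!mulmxA (mulmxA A^T) A1 mul1mx B1 eqxx /=.
by rewrite (mulmxA B) B2 mul1mx A2.
Qed.

Definition refl m (u : 'cV['F_2]_m) : 'M['F_2]_m := 1%:M + u *m u^T.

Lemma refl_tr m (u : 'cV['F_2]_m) : (refl u)^T = refl u.
Proof. by rewrite /refl linearD /= trmx1 trmx_mul trmxK. Qed.

Lemma addM_xx m n (x : 'M['F_2]_(m,n)) : x + x = 0.
Proof. by apply/matrixP => i j; rewrite !mxE F2_addxx. Qed.

Lemma refl_sq m (u : 'cV['F_2]_m) : dot u u = 0 -> refl u *m refl u = 1%:M.
Proof.
move=> uu.
have h0 : u^T *m u = 0.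
  by apply/matrixP => i j; rewrite (ord1 i) (ord1 j) dot_mx uu mxE.
rewrite /refl mulmxDl !mulmxDr !mul1mx mulmx1 -!mulmxA (mulmxA u^T) h0.
by rewrite mul0mx mulmx0 addr0 -addrA addM_xx addr0.
Qed.

Lemma refl_G m (u : 'cV['F_2]_m) : dot u u = 0 -> refl u \in orth_group m.
Proof. by move=> uu; rewrite inG refl_tr refl_sq // eqxx. Qed.

Lemma refl_apply m (u v : 'cV['F_2]_m) : refl u *m v = v + dot u v *: u.
Proof.
rewrite /refl mulmxDl mul1mx; congr (_ + _).
apply/matrixP => i k; rewrite (ord1 k) -mulmxA !mxE big_ord1 -dot_mx.
by rewrite mulrC.
Qed.

Lemma dot_mul m (A : 'M['F_2]_m) x y :
  A \in orth_group m -> dot (A *m x) (A *m y) = dot x y.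
Proof.
rewrite inG => /andP[/eqP A1 _].
by rewrite -!dot_mx trmx_mul -mulmxA (mulmxA A^T) A1 mul1mx.
Qed.

Lemma mul_j m (A : 'M['F_2]_m) : A *m A^T = 1%:M -> A *m jvec m = jvec m.
Proof.
move=> h; apply/matrixP => i k; rewrite (ord1 k) !mxE.
move/matrixP: h => /(_ i i); rewrite !mxE eqxx /= mulr1n => <-.
by apply: eq_bigr => l _; rewrite !mxE mulr1 F2_mulxx.
Qed.

Lemma G_j m (A : 'M['F_2]_m) : A \in orth_group m -> A *m jvec m = jvec m.
Proof. by rewrite inG => /andP[_ /eqP h]; exact: mul_j. Qed.

Lemma GT_j m (A : 'M['F_2]_m) : A \in orth_group m -> A^T *m jvec m = jvec m.
Proof. by rewrite inG => /andP[/eqP h _]; apply: mul_j; rewrite trmxK. Qed.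

Lemma G_inj m (A : 'M['F_2]_m) (x : 'cV['F_2]_m) :
  A \in orth_group m -> A^T *m (A *m x) = x.
Proof. by rewrite inG => /andP[/eqP h _]; rewrite mulmxA h mul1mx. Qed.

Lemma F2_pp1 (p : 'F_2) : p + (p + 1) = 1.
Proof. by rewrite addrA F2_addxx add0r. Qed.

Lemma step m (v w : 'cV['F_2]_m) :
  dot v v = dot w w -> dot v v + dot v w = 1 ->
  exists2 A, A \in orth_group m & w = A *m v.
Proof.
move=> hvw h; exists (refl (v + w)).
  apply: refl_G; rewrite dotDl !dotDr (dotC w v) -hvw.
  by case: (F2_cases (dot v v)) => ->; case: (F2_cases (dot v w)) => ->; apply/eqP.
by rewrite refl_apply dotDl (dotC w v) h scale1r addKx.
Qed.

Lemma step2 m (v w z : 'cV['F_2]_m) :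
  dot v v = dot w w -> dot z z = dot v v ->
  dot v z = dot v v + 1 -> dot z w = dot v v + 1 ->
  exists2 A, A \in orth_group m & w = A *m v.
Proof.
move=> hvw hz h1 h2.
have [A1 GA1 e1] : exists2 A, A \in orth_group m & z = A *m v.
  by apply: step; rewrite ?hz // h1 F2_pp1.
have [A2 GA2 ->] : exists2 A, A \in orth_group m & w = A *m z.
  by apply: step; [rewrite hz | rewrite hz h2 F2_pp1].
by exists (A2 *m A1); [exact: GM | rewrite e1 mulmxA].
Qed.

Lemma F2_neq0 (x : 'F_2) : x != 0 -> x = 1.
Proof. by case: (F2_cases x) => -> //; rewrite eqxx. Qed.

Lemma F2_neq1 (x : 'F_2) : x != 1 -> x = 0.
Proof. by case: (F2_cases x) => -> //; rewrite eqxx. Qed.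

Lemma sum_ones m : ~~ odd m -> \sum_(i < m) (1 : 'F_2) = 0.
Proof.
move=> hm; rewrite sumr_const card_ord -mulr_natl mulr1 F2_natr.
by rewrite (negbTE hm).
Qed.

Lemma find_z m (v w : 'cV['F_2]_m) : ~~ odd m ->
  v != 0 -> v != jvec m -> w != 0 -> w != jvec m ->
  dot v v = dot w w -> dot v w = dot v v ->
  exists z : 'cV['F_2]_m,
    [/\ dot z z = dot v v, dot v z = dot v v + 1 & dot z w = dot v v + 1].
Proof.
move=> hm v0 vj w0 wj hvw hvw2.
set e := fun (x y : 'F_2) => [exists a, (v a 0 == x) && (w a 0 == y)].
have noP : forall x y, ~~ e x y -> forall a, v a 0 = x -> w a 0 <> y.
  move=> x y /existsPn H a ha hb; move: (H a).
  by rewrite ha hb !eqxx.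
have fix1 : forall x : 'F_2, x <> 0 -> x = 1.
  by move=> x; case: (F2_cases x).
have fix0 : forall x : 'F_2, x <> 1 -> x = 0.
  by move=> x; case: (F2_cases x).
have e11 : (1 + 1 : 'F_2) = 0 by apply/eqP.
case: (F2_cases (dot v v)) => hp.
-
  suff [a [b [ha hb]]] : exists a b, v a 0 + v b 0 = 1 /\ w a 0 + w b 0 = 1.
    have ab : b != a.
      by apply/eqP => eab; move: ha; rewrite eab F2_addxx => /eqP.
    exists (delta_mx a 0 + delta_mx b 0); rewrite hp add0r.
    split; last by rewrite dotDl !dot_deltal hb.
      rewrite dotDl !dot_deltal !mxE !eqxx /= (negbTE ab) eq_sym (negbTE ab) /=.
      by apply/eqP.
    by rewrite dotDr !dot_deltar ha.
  have pairP : forall x y, e x y -> e (x + 1) (y + 1) ->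
      exists a b, v a 0 + v b 0 = 1 /\ w a 0 + w b 0 = 1.
    move=> x y /existsP[a /andP[/eqP ha1 /eqP ha2]]
               /existsP[b /andP[/eqP hb1 /eqP hb2]].
    by exists a, b; rewrite ha1 ha2 hb1 hb2 !F2_pp1.
  case E1: (e 0 0 && e 1 1).
    by case/andP: E1 => h1 h2; apply: (pairP 0 0); rewrite ?add0r.
  case E2: (e 0 1 && e 1 0).
    by case/andP: E2 => h1 h2; apply: (pairP 0 1); rewrite ?add0r ?e11.
  exfalso.
  case E00: (e 0 0); case E01: (e 0 1); move: E1 E2; rewrite ?E00 ?E01 /=;
    move=> /negbT n1 /negbT n2.
  + move/eqP: v0; apply; apply/matrixP => a k; rewrite (ord1 k) mxE.
    apply: fix0 => hv; case: (F2_cases (w a 0)) => hw.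
      exact: (noP 1 0 n2 a hv hw).
    exact: (noP 1 1 n1 a hv hw).
  + move/eqP: w0; apply; apply/matrixP => a k; rewrite (ord1 k) mxE.
    apply: fix0 => hw; case: (F2_cases (v a 0)) => hv.
      exact: (noP 0 1 (negbT E01) a hv hw).
    exact: (noP 1 1 n1 a hv hw).
  + move/eqP: wj; apply; apply/matrixP => a k; rewrite (ord1 k) /jvec mxE.
    apply: fix1 => hw; case: (F2_cases (v a 0)) => hv.
      exact: (noP 0 0 (negbT E00) a hv hw).
    exact: (noP 1 0 n2 a hv hw).
  + move/eqP: vj; apply; apply/matrixP => a k; rewrite (ord1 k) /jvec mxE.
    apply: fix1 => hv; case: (F2_cases (w a 0)) => hw.
      exact: (noP 0 0 (negbT E00) a hv hw).
    exact: (noP 0 1 (negbT E01) a hv hw).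
-
  case E: (e 0 0).
    case/existsP: E => a /andP[/eqP ha /eqP hb].
    exists (delta_mx a 0); rewrite hp e11 !dot_deltal dot_deltar ha hb.
    by rewrite mxE !eqxx.
  exfalso; move/negbT: E => n00.
  have H : \sum_(a < m) (v a 0 + w a 0 + v a 0 * w a 0) = 1.
    rewrite !big_split /= -!dot_self -/(dot v w) -hvw hvw2 hp.
    by apply/eqP.
  move: H; rewrite (eq_bigr (fun _ => 1)) ?sum_ones //.
  move=> a _; case: (F2_cases (v a 0)) => hv; case: (F2_cases (w a 0)) => hw;
    rewrite hv hw; try by apply/eqP.
  by case: (noP 0 0 n00 a hv hw).
Qed.

Lemma trans m (v w : 'cV['F_2]_m) : ~~ odd m ->
  v != 0 -> v != jvec m -> w != 0 -> w != jvec m ->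
  dot v v = dot w w -> exists2 A, A \in orth_group m & w = A *m v.
Proof.
move=> hm v0 vj w0 wj hvw.
case: (eqVneq (dot v w) (dot v v)) => h.
  have [z [h1 h2 h3]] := find_z hm v0 vj w0 wj hvw h.
  exact: (step2 hvw h1 h2 h3).
apply: step => //; move: h.
by case: (F2_cases (dot v v)) => ->; case: (F2_cases (dot v w)) => ->;
  rewrite ?eqxx //; move=> _; apply/eqP.
Qed.

Lemma dot0 m : dot (0 : 'cV['F_2]_m) 0 = 0.
Proof. by rewrite /dot big1 // => i _; rewrite mxE mul0r. Qed.

Lemma dotj m : ~~ odd m -> dot (jvec m) (jvec m) = 0.
Proof.
move=> hm; rewrite dot_self (eq_bigr (fun _ => 1)) ?sum_ones // => i _.
by rewrite mxE.
Qed.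

Definition cls m (v : 'cV['F_2]_m) : {set 'cV['F_2]_m} :=
  if v == 0 then [set 0] else if v == jvec m then [set jvec m]
  else if odd (hweight v) then odd_vecs m
  else even_vecs m :\: [set 0; jvec m].

Lemma memS m (v w : 'cV['F_2]_m) : ~~ odd m -> v != 0 -> v != jvec m ->
  (w \in (if odd (hweight v) then odd_vecs m
          else even_vecs m :\: [set 0; jvec m])) =
  [&& w != 0, w != jvec m & dot w w == dot v v].
Proof.
move=> hm v0 vj; rewrite hweight_dot.
case: (F2_cases (dot v v)) => ->; rewrite ?eqxx /=.
  rewrite !inE hweight_dot negb_or -andbA.
  by case: (F2_cases (dot w w)) => ->; rewrite ?eqxx /= ?andbT ?andbF.
rewrite !inE hweight_dot.
case: (eqVneq w 0) => [->|w0]; first by rewrite dot0.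
case: (eqVneq w (jvec m)) => [->|wj]; first by rewrite dotj.
by [].
Qed.

Lemma orbit_mem m (v w : 'cV['F_2]_m) :
  reflect (exists2 A, A \in orth_group m & w = A *m v) (w \in orth_orbit v).
Proof. exact: imsetP. Qed.

Lemma orbit_eq m (v : 'cV['F_2]_m) : ~~ odd m -> orth_orbit v = cls v.
Proof.
move=> hm; apply/setP => w; rewrite /cls.
case: (eqVneq v 0) => [->|v0].
  rewrite inE; apply/orbit_mem/eqP => [[A _ ->]|->]; first by rewrite mulmx0.
  by exists 1%:M; [exact: G1 | rewrite mulmx0].
case: (eqVneq v (jvec m)) => [->|vj].
  rewrite inE; apply/orbit_mem/eqP => [[A GA ->]|->]; first by rewrite G_j.
  by exists 1%:M; [exact: G1 | rewrite mul1mx].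
rewrite memS //; apply/orbit_mem/idP => [[A GA ->]|].
  rewrite dot_mul // eqxx andbT; apply/andP; split.
    apply: contra v0 => /eqP h; by rewrite -(G_inj v GA) h mulmx0.
  apply: contra vj => /eqP h; by rewrite -(G_inj v GA) h GT_j.
case/and3P => w0 wj /eqP hw.
by apply: trans => //.
Qed.

Lemma neq_set m (A B : {set 'cV['F_2]_m}) x : x \in A -> x \notin B -> A != B.
Proof. by move=> hA hB; apply: contraNneq hB => <-. Qed.

Lemma card4 (T : finType) (a b c d : T) :
  a != b -> a != c -> a != d -> b != c -> b != d -> c != d ->
  #|[set a; b; c; d]| = 4%N.
Proof.
move=> ab ac ad bc bd cd.
rewrite -!setUA !cardsU1 cards1 !inE (negbTE ab) (negbTE ac) (negbTE ad).
by rewrite (negbTE bc) (negbTE bd) (negbTE cd).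
Qed.

Theorem mainTheorem14 (n : nat) (hn : (2 <= n)%N) :
  orth_orbits (2 * n) =
    [set [set 0%R]; [set jvec (2 * n)];
         even_vecs (2 * n) :\: [set 0%R; jvec (2 * n)];
         odd_vecs (2 * n)]
  /\ #|orth_orbits (2 * n)| = 4%N.
Proof.
set m := (2 * n)%N.
have hm : ~~ odd m by rewrite /m mul2n odd_double.
have h0 : (0 < m)%N by rewrite /m; lia.
have h1 : (1 < m)%N by rewrite /m; lia.
have h2 : (2 < m)%N by rewrite /m; lia.
set i0 : 'I_m := Ordinal h0.
set i1 : 'I_m := Ordinal h1.
set i2 : 'I_m := Ordinal h2.
have n01 : (i0 == i1) = false by [].
have n02 : (i0 == i2) = false by [].
have n12 : (i1 == i2) = false by [].
set j := jvec m.
set e1 : 'cV['F_2]_m := delta_mx i0 0.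
set e2 : 'cV['F_2]_m := delta_mx i0 0 + delta_mx i1 0.
have j0 : j != 0.
  by apply/eqP => /matrixP /(_ i0 0); rewrite !mxE.
have e10 : e1 != 0.
  by apply/eqP => /matrixP /(_ i0 0); rewrite !mxE !eqxx.
have e1j : e1 != j.
  by apply/eqP => /matrixP /(_ i1 0); rewrite !mxE eq_sym n01.
have e20 : e2 != 0.
  apply/eqP => /matrixP /(_ i0 0); rewrite !mxE !eqxx n01 /=.
  by move/eqP.
have e2j : e2 != j.
  apply/eqP => /matrixP /(_ i2 0); rewrite !mxE eq_sym n02 eq_sym n12 /=.
  by move/eqP.
have de1 : dot e1 e1 = 1 by rewrite dot_deltal mxE !eqxx.
have de2 : dot e2 e2 = 0.
  rewrite dotDl !dot_deltal !mxE !eqxx n01 eq_sym n01 /=.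
  by apply/eqP.
set S0 := [set (0 : 'cV['F_2]_m)].
set Sj := [set j].
set Se := even_vecs m :\: [set 0; j].
set So := odd_vecs m.
have c0 : cls 0 = S0 by rewrite /cls eqxx.
have cj : cls j = Sj by rewrite /cls (negbTE j0) eqxx.
have ce : cls e2 = Se by rewrite /cls (negbTE e20) (negbTE e2j) hweight_dot de2.
have co : cls e1 = So by rewrite /cls (negbTE e10) (negbTE e1j) hweight_dot de1.
have E : orth_orbits m = [set S0; Sj; Se; So].
  rewrite /orth_orbits (eq_imset _ (fun v => orbit_eq v hm)).
  apply/setP => S; apply/imsetP/idP => [[v _ ->]|].
    rewrite /cls !inE.
    case: (v == 0); first by rewrite eqxx.
    case: (v == j); first by rewrite eqxx orbT.
    by case: (odd _); rewrite eqxx ?orbT.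
  rewrite !inE => /orP[/orP[/orP[|]|]|] /eqP ->.
  - by exists 0.
  - by exists j.
  - by exists e2.
  - by exists e1.
split => //; rewrite E; apply: card4; rewrite /S0 /Sj /Se /So /odd_vecs /even_vecs.
- by apply: (@neq_set _ _ _ 0); rewrite !inE ?eqxx // eq_sym.
- by apply: (@neq_set _ _ _ 0); rewrite !inE eqxx.
- apply: (@neq_set _ _ _ 0); first by rewrite inE.
  by rewrite inE hweight_dot dot0.
- by apply: (@neq_set _ _ _ j); rewrite !inE eqxx ?orbT.
- apply: (@neq_set _ _ _ j); first by rewrite inE.
  by rewrite inE hweight_dot dotj.
- apply: (@neq_set _ _ _ e2).
    by rewrite !inE (negbTE e20) (negbTE e2j) /= hweight_dot de2.
  by rewrite inE hweight_dot de2.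
Qed.
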